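(* Let $(M,g)$ be a spacetime and let $\gamma$ be the worldline of an arbitrarily accelerated observer $\mathcal O$ (with arbitrarily rotating spatial triad). Let $e_a$ be the proper reference frame of $\mathcal O$, and take $e_a$ as the teleparallel frame. Then the gravitational energy-momentum density and the angular momentum density vanish along $\gamma$: $t^{\mu a}|_\gamma=0$ and $M^{ab}|_\gamma=0$.
   Context: Signature $(+,-,-,-)$. A tetrad $e_a=e_a{}^\mu\partial_\mu$ with coframe $\theta^a=e^a{}_\mu dx^\mu$ satisfies $g_{\mu\nu}=\eta_{ab}e^a{}_\mu e^b{}_\nu$; indices are converted with the tetrad and raised/lowered with $\eta_{ab}$ or $g_{\mu\nu}$; $e=\det(e^a{}_\mu)$. The proper reference frame of $\mathcal O$: along $\gamma$, $e_{(0)}$ is the observer's 4-velocity and $e_{(i)}$ its spatial triad; the frame is extended off $\gamma$ by parallel transport (Levi-Civita connection) along the spacelike geodesics orthogonal to $e_{(0)}$, i.e. it is the tetrad adapted to the observer's proper (Fermi-type) coordinates, so that along $\gamma$ the Levi-Civita spin connection is $\mathring\omega^a{}_{bc}|_\gamma=\delta^{(0)}_b\big(a^a\delta^{(0)}_c-a_c\delta^a_{(0)}+\omega^d\varepsilon_{(0)dec}\eta^{ea}\big)$ with $a^a$ the acceleration and $\omega^d$ the triad rotation. Taking $e_a$ as teleparallel frame means the torsion is $T^a{}_{\mu\nu}=\partial_\mu e^a{}_\nu-\partial_\nu e^a{}_\mu$. Define $T_a=T^b{}_{ba}$, $\Sigma^{\lambda\mu\nu}=\tfrac14\big(T^{\lambda\mu\nu}+T^{\mu\lambda\nu}-T^{\nu\lambda\mu}\big)+\tfrac12\big(g^{\lambda\nu}T^{\mu}-g^{\lambda\mu}T^{\nu}\big)$,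 $T=\Sigma^{abc}T_{abc}$, $t^{\mu a}=k\big(4\Sigma^{bc\mu}T_{bc}{}^{a}-e^{a\mu}T\big)$, and $M^{ab}=-4ke\big(\Sigma^{a0b}-\Sigma^{b0a}\big)$, with $k=1/(16\pi)$. *)

(* Defs.v *)
From HB Require Import structures.
From mathcomp Require Import all_boot all_order all_algebra.
From mathcomp Require Import all_classical all_reals all_analysis.
Set Implicit Arguments. Unset Strict Implicit. Unset Printing Implicit Defensive.
Import Order.TTheory GRing.Theory Num.Theory.
Import numFieldNormedType.Exports.
Local Open Scope ring_scope.

(* Local coordinates x = (x^0,x^1,x^2,x^3) : 'rV[R]_4 on a chart of spacetime.
   A tetrad field is E : 'rV_4 -> 'M_4 with  E x a mu = e^a_mu(x)
   (row = frame index a, column = coordinate index mu).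
   Frame and coordinate indices both range over 'I_4; index 0 = time.       *)

Section TEGR.
Variable R : realType.
Implicit Types (E : 'rV[R]_4 -> 'M[R]_4) (x : 'rV[R]_4).

Definition cb (mu : 'I_4) : 'rV[R]_4 := delta_mx 0 mu.

Definition pd (mu : 'I_4) (f : 'rV[R]_4 -> R) x : R := 'D_(cb mu) f x.

(* Minkowski metric, signature (+,-,-,-); eta^{ab} = eta_{ab} numerically *)
Definition eta (a b : 'I_4) : R :=
  if a == b then (if a == ord0 then 1 else -1) else 0.

(* inverse tetrad: einv E x mu a = e_a^mu(x) *)
Definition einv E x : 'M[R]_4 := invmx (E x).

Definition gmet E x (m n : 'I_4) : R :=
  \sum_(a < 4) \sum_(b < 4) eta a b * E x a m * E x b n.

Definition ginv E x (m n : 'I_4) : R :=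
  \sum_(a < 4) \sum_(b < 4) eta a b * einv E x m a * einv E x n b.

Definition Gam E x (m n l : 'I_4) : R :=
  2^-1 * \sum_(r < 4) ginv E x m r *
    (pd n (fun y => gmet E y r l) x + pd l (fun y => gmet E y r n) x
     - pd r (fun y => gmet E y n l) x).

Definition torsion E x (a m n : 'I_4) : R :=
  pd m (fun y => E y a n) x - pd n (fun y => E y a m) x.

Definition Tudd E x (l m n : 'I_4) : R :=
  \sum_(a < 4) einv E x l a * torsion E x a m n.

Definition Tuuu E x (l m n : 'I_4) : R :=
  \sum_(p < 4) \sum_(q < 4) ginv E x m p * ginv E x n q * Tudd E x l p q.

Definition Tddd E x (l m n : 'I_4) : R :=
  \sum_(p < 4) gmet E x l p * Tudd E x p m n.

Definition Tvd E x (n : 'I_4) : R := \sum_(l < 4) Tudd E x l l n.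
Definition Tvu E x (m : 'I_4) : R := \sum_(n < 4) ginv E x m n * Tvd E x n.

Definition Sigma E x (l m n : 'I_4) : R :=
  4^-1 * (Tuuu E x l m n + Tuuu E x m l n - Tuuu E x n l m)
  + 2^-1 * (ginv E x l n * Tvu E x m - ginv E x l m * Tvu E x n).

Definition Tscal E x : R :=
  \sum_(l < 4) \sum_(m < 4) \sum_(n < 4) Sigma E x l m n * Tddd E x l m n.

Definition kconst : R := (16 * pi)^-1.

Definition eup E x (a m : 'I_4) : R := \sum_(b < 4) eta a b * einv E x m b.

Definition Tddu_frame E x (l n a : 'I_4) : R :=
  \sum_(r < 4) \sum_(s < 4) Tddd E x l n r * ginv E x r s * E x a s.

Definition tdens E x (m a : 'I_4) : R :=
  kconst * (4 * (\sum_(l < 4) \sum_(n < 4) Sigma E x l n m * Tddu_frame E x l n a)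
            - eup E x a m * Tscal E x).

Definition Sigma_fcf E x (a m b : 'I_4) : R :=
  \sum_(l < 4) \sum_(n < 4) E x a l * E x b n * Sigma E x l m n.

Definition Mdens E x (a b : 'I_4) : R :=
  - 4 * kconst * \det (E x) * (Sigma_fcf E x a ord0 b - Sigma_fcf E x b ord0 a).

(* the observer's worldline in its proper coordinates: x = (tau,0,0,0) *)
Definition worldline (tau : R) : 'rV[R]_4 := tau *: cb ord0.

End TEGR.

(* Main.v *)
Require Import Defs.
From HB Require Import structures.
From mathcomp Require Import all_boot all_order all_algebra.
From mathcomp Require Import all_classical all_reals all_analysis.
From mathcomp Require Import ring lra.
Import Order.TTheory GRing.Theory Num.Theory.
Import numFieldNormedType.Exports.
Set Implicit Arguments. Unset Strict Implicit. Unset Printing Implicit Defensive.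
Local Open Scope classical_set_scope.
Local Open Scope ring_scope.

Notation i0 := (@Ordinal 4 0 isT).
Notation i1 := (@Ordinal 4 1 isT).
Notation i2 := (@Ordinal 4 2 isT).
Notation i3 := (@Ordinal 4 3 isT).

Lemma ord4P (i : 'I_4) : i = i0 \/ i = i1 \/ i = i2 \/ i = i3.
Proof.
case: i => [[|[|[|[|k]]]] Hk].
- by left; apply: val_inj.
- by right; left; apply: val_inj.
- by right; right; left; apply: val_inj.
- by right; right; right; apply: val_inj.
- by [].
Qed.

Lemma sum4 (R : nmodType) (F : 'I_4 -> R) : \sum_(i<4) F i = F i0 + F i1 + F i2 + F i3.
Proof.
rewrite !big_ord_recr big_ord0 /= add0r.
by congr (_ + _ + _ + _); congr F; apply: val_inj.
Qed.

Definition Dform {R : realType} (p1 p2 p3 w12 w13 w23 : R) (m a n : 'I_4) : R :=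
 match nat_of_ord m, nat_of_ord a, nat_of_ord n with
 | 1, 0, 0 => p1 | 2,0,0 => p2 | 3,0,0 => p3
 | 1, 2, 0 => w12 | 2, 1, 0 => -w12 | 1,3,0 => w13 | 3,1,0 => -w13 | 2,3,0 => w23 | 3,2,0 => -w23
 | _,_,_ => 0 end.
Definition TD {R : realType} (p1 p2 p3 w12 w13 w23 : R) (a m n : 'I_4) : R :=
  Dform p1 p2 p3 w12 w13 w23 m a n - Dform p1 p2 p3 w12 w13 w23 n a m.
Definition Tuuu0 {R : realType} (T : 'I_4 -> 'I_4 -> 'I_4 -> R) l m n := Defs.eta R m m * Defs.eta R n n * T l m n.
Definition Tddd0 {R : realType} (T : 'I_4 -> 'I_4 -> 'I_4 -> R) l m n := Defs.eta R l l * T l m n.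
Definition Tvu0 {R : realType} (T : 'I_4 -> 'I_4 -> 'I_4 -> R) m := Defs.eta R m m * \sum_(l<4) T l l m.
Definition Sig0 {R : realType} (T : 'I_4 -> 'I_4 -> 'I_4 -> R) l m n :=
  4^-1 * (Tuuu0 T l m n + Tuuu0 T m l n - Tuuu0 T n l m) + 2^-1 * (Defs.eta R l n * Tvu0 T m - Defs.eta R l m * Tvu0 T n).


Lemma Ts0 (R : realType) (p1 p2 p3 w12 w13 w23 : R) :
  \sum_(l<4) \sum_(m<4) \sum_(n<4)
     Sig0 (TD p1 p2 p3 w12 w13 w23) l m n * Tddd0 (TD p1 p2 p3 w12 w13 w23) l m n = 0.
Proof.
rewrite /Sig0 /Tddd0 /Tuuu0 /Tvu0 /TD.
rewrite !sum4 /Defs.eta /Dform /=.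
by field; rewrite ?pnatr_eq0.
Qed.

Lemma alg_t (R : realType) (p1 p2 p3 w12 w13 w23 : R) (m a : 'I_4) :
  \sum_(l<4) \sum_(n<4) Sig0 (TD p1 p2 p3 w12 w13 w23) l n m *
      (Tddd0 (TD p1 p2 p3 w12 w13 w23) l n a * Defs.eta R a a) = 0.
Proof.
rewrite /Sig0 /Tddd0 /Tuuu0 /Tvu0 /TD.
case: (ord4P m) => [->|[->|[->|->]]]; case: (ord4P a) => [->|[->|[->|->]]];
rewrite !sum4 /Defs.eta /Dform /=; by field; rewrite ?pnatr_eq0.
Qed.

Lemma alg_M (R : realType) (p1 p2 p3 w12 w13 w23 : R) (a b : 'I_4) :
  Sig0 (TD p1 p2 p3 w12 w13 w23) a ord0 b - Sig0 (TD p1 p2 p3 w12 w13 w23) b ord0 a = 0.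
Proof.
rewrite /Sig0 /Tddd0 /Tuuu0 /Tvu0 /TD.
case: (ord4P a) => [->|[->|[->|->]]]; case: (ord4P b) => [->|[->|[->|->]]];
rewrite !sum4 /Defs.eta /Dform /=; by field; rewrite ?pnatr_eq0.
Qed.

Lemma mulR_cont (R : realType) : continuous (fun z : R * R => z.1 * z.2).
Proof. exact: mul_continuous. Qed.
Lemma addR_cont (R : realType) : continuous (fun z : R * R => z.1 + z.2).
Proof. exact: add_continuous. Qed.

Lemma cvg_det (R : realType) n T (F : set_system T) (FF : Filter F)
  (M : T -> 'M[R]_n) (L : 'M[R]_n) :
  (forall i j, (fun t => M t i j) @ F --> L i j) ->
  (fun t => \det (M t)) @ F --> \det L.
Proof.
move=> HM; rewrite /determinant.
apply: (@cvg_big R _ +%R 0 xpredT (@addR_cont R)) => s _.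
apply: cvgM; first exact: cvg_cst.
apply: (@cvg_big R _ *%R 1 xpredT (@mulR_cont R)) => i _.
exact: HM.
Qed.

Lemma cvg_invmx (R : realType) n T (F : set_system T) (FF : Filter F)
  (M : T -> 'M[R]_n) (L : 'M[R]_n) :
  L \in unitmx -> (\forall t \near F, M t \in unitmx) ->
  (forall i j, (fun t => M t i j) @ F --> L i j) ->
  forall i j, (fun t => invmx (M t) i j) @ F --> invmx L i j.
Proof.
move=> uL uM HM i j.
apply: cvg_trans; first apply: near_eq_cvg.
  near=> t. rewrite /invmx. have -> : M t \in unitmx by near: t. reflexivity.
rewrite /invmx uL.
under eq_cvg do rewrite mxE.
rewrite mxE.
apply: cvgM.
  apply: cvgV; first by move: uL; rewrite unitmxE unitfE.
  exact: cvg_det.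
under eq_cvg do rewrite mxE.
rewrite mxE /cofactor.
apply: cvgM; first exact: cvg_cst.
apply: cvg_det => k l.
under eq_cvg do rewrite !mxE.
rewrite !mxE.
exact: HM.
Unshelve. all: by end_near.
Qed.

Lemma line_cvg (R : realType) (v x : 'rV[R]_4) : (fun h : R => h *: v + x) @ 0^' --> x.
Proof.
have H : (fun h : R => h *: v + x) @ 0 --> 0 *: v + x.
  apply: cvgD; last exact: cvg_cst.
  apply: cvgZr_tmp. exact: cvg_id.
have := (continuous_withinNx (fun h : R => h *: v + x) 0).1 H.
by rewrite scale0r add0r.
Qed.

Lemma sum_id1 (R : realType) (mu : 'I_4) (F : 'I_4 -> R) :
  \sum_(b<4) (1%:M : 'M[R]_4) mu b * F b = F mu.
Proof.
rewrite (bigD1 mu) //= mxE eqxx mulr1n mul1r big1 ?addr0 // => b nb.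
by rewrite mxE eq_sym (negbTE nb) mulr0n mul0r.
Qed.

Lemma D_inv (R : realType) (U : set 'rV[R]_4) (E : 'rV[R]_4 -> 'M[R]_4) x v :
  open U -> U x -> (forall y, U y -> E y \in unitmx) -> E x = 1%:M ->
  (forall a m, differentiable (fun y => E y a m) x) ->
  forall mu a, 'D_v (fun y => einv E y mu a) x = - 'D_v (fun y => E y mu a) x.
Proof.
move=> oU Ux uE Ex dE mu a.
have sE : forall (r s : R), r *: s = r * s by [].
have nU : \forall h \near (0:R)^', U (h *: v + x).
  have hx : nbhs x U by apply: open_nbhs_nbhs.
  exact: (@line_cvg R v x _ hx).
have cE : forall b c, (fun h : R => E (h *: v + x) b c) @ 0^' --> E x b c.
  move=> b c.
  exact: (cvg_comp (fun h : R => h *: v + x) (fun y => E y b c) (@line_cvg R v x) (differentiable_continuous (dE b c))).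
have cI : forall b c, (fun h : R => einv E (h *: v + x) b c) @ 0^' --> (1%:M : 'M[R]_4) b c.
  move=> b c; rewrite -invmx1 -Ex; apply: cvg_invmx => //.
  - by rewrite Ex unitmx1.
  - by near=> h; apply: uE; near: h; exact: nU.
pose q := fun h : R => \sum_(b < 4) einv E (h *: v + x) mu b *
     - (h^-1 *: (((fun y => E y b a) \o shift x) (h *: v) - E x b a)).
have Hq : q @ 0^' --> - 'D_v (fun y => E y mu a) x.
  have -> : - 'D_v (fun y => E y mu a) x
     = \sum_(b<4) (1%:M : 'M[R]_4) mu b * - 'D_v (fun y => E y b a) x.
    by rewrite sum_id1.
  apply: (@cvg_big R _ +%R 0 xpredT (@addR_cont R)) => b _.
  apply: cvgM; first exact: cI.
  exact: (cvgN (diff_derivable (v:=v) (dE b a))).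
rewrite /derive; apply: cvg_lim => //.
apply: cvg_trans Hq; apply: near_eq_cvg.
near=> h.
have Uh : U (h *: v + x) by near: h; exact: nU.
have e1 : (einv E (h *: v + x) *m (1%:M - E (h *: v + x))) mu a
          = einv E (h *: v + x) mu a - (1%:M : 'M[R]_4) mu a.
  by rewrite mulmxBr mulmx1 /einv mulVmx ?uE // !mxE.
have e2 : einv E x = 1%:M by rewrite /einv Ex invmx1.
rewrite /q /= e2 sE -e1 mxE mulr_sumr.
apply: eq_bigr => b _; rewrite sE Ex !mxE /=; ring.
Unshelve. all: by end_near.
Qed.

Lemma sum_idR (R : realType) (a : 'I_4) (F : 'I_4 -> R) :
  \sum_(b<4) F b * (1%:M : 'M[R]_4) b a = F a.
Proof.
rewrite (bigD1 a) //= mxE eqxx mulr1n mulr1 big1 ?addr0 // => b nb.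
by rewrite mxE (negbTE nb) mulr0n mulr0.
Qed.

Lemma sum_idL (R : realType) (a : 'I_4) (F : 'I_4 -> R) :
  \sum_(b<4) F b * (1%:M : 'M[R]_4) a b = F a.
Proof.
rewrite (bigD1 a) //= mxE eqxx mulr1n mulr1 big1 ?addr0 // => b nb.
by rewrite mxE eq_sym (negbTE nb) mulr0n mulr0.
Qed.

Lemma sum_eta (R : realType) (n : 'I_4) (F : 'I_4 -> R) :
  \sum_(q<4) Defs.eta R n q * F q = Defs.eta R n n * F n.
Proof.
rewrite (bigD1 n) //= big1 ?addr0 // => q nq.
by rewrite /Defs.eta eq_sym (negbTE nq) mul0r.
Qed.

Lemma sum_etaR (R : realType) (n : 'I_4) (F : 'I_4 -> R) :
  \sum_(q<4) F q * Defs.eta R q n = F n * Defs.eta R n n.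
Proof.
rewrite (bigD1 n) //= big1 ?addr0 // => q nq.
by rewrite /Defs.eta (negbTE nq) mulr0.
Qed.

Lemma sum_cb (R : realType) (i : 'I_4) (F : 'I_4 -> R) :
  \sum_(p<4) F p * cb R i 0 p = F i.
Proof.
rewrite (bigD1 i) //= /cb mxE !eqxx mulr1n mulr1 big1 ?addr0 // => b nb.
by rewrite mxE (negbTE nb) andbF mulr0n mulr0.
Qed.

Lemma DM (R : realType) (f g : 'rV[R]_4 -> R) x v :
  derivable f x v -> derivable g x v ->
  'D_v (fun y => f y * g y) x = f x * 'D_v g x + g x * 'D_v f x.
Proof. move=> df dg; exact: (deriveM df dg). Qed.

Lemma DMd (R : realType) (f g : 'rV[R]_4 -> R) x v :
  derivable f x v -> derivable g x v -> derivable (fun y => f y * g y) x v.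
Proof. move=> df dg; exact: (derivableM df dg). Qed.

Lemma DS (R : realType) (F : 'I_4 -> 'rV[R]_4 -> R) x v :
  (forall i, derivable (F i) x v) ->
  'D_v (fun y => \sum_(i<4) F i y) x = \sum_(i<4) 'D_v (F i) x.
Proof.
move=> dF.
have -> : (fun y => \sum_(i<4) F i y) = \sum_(i<4) F i by rewrite fct_sumE.
exact: derive_sum.
Qed.

Lemma DSd (R : realType) (F : 'I_4 -> 'rV[R]_4 -> R) x v :
  (forall i, derivable (F i) x v) -> derivable (fun y => \sum_(i<4) F i y) x v.
Proof.
move=> dF.
have -> : (fun y => \sum_(i<4) F i y) = \sum_(i<4) F i by rewrite fct_sumE.
exact: derivable_sum.
Qed.

Lemma D_gmet (R : realType) (E : 'rV[R]_4 -> 'M[R]_4) x k m n :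
  (forall a b, differentiable (fun y => E y a b) x) -> E x = 1%:M ->
  pd k (fun y => gmet E y m n) x =
    Defs.eta R n n * pd k (fun y => E y n m) x + Defs.eta R m m * pd k (fun y => E y m n) x.
Proof.
move=> dE Ex.
have dd : forall a b, derivable (fun y => E y a b) x (cb R k).
  by move=> a b; apply: diff_derivable.
have dc : forall c : R, derivable (fun _ : 'rV[R]_4 => c) x (cb R k).
  by move=> c; exact: derivable_cst.
have dc0 : forall c : R, 'D_(cb R k) (fun _ : 'rV[R]_4 => c) x = 0.
  by move=> c; exact: derive_cst.
have key : forall a b, 'D_(cb R k) (fun y => Defs.eta R a b * E y a m * E y b n) x
   = Defs.eta R a b * (E x a m * pd k (fun y => E y b n) x + E x b n * pd k (fun y => E y a m) x).
  move=> a b.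
  have d1 : derivable (fun y => Defs.eta R a b * E y a m) x (cb R k).
    exact: (@DMd R (fun _ => Defs.eta R a b) (fun y => E y a m)).
  have h1 := @DM R (fun y => Defs.eta R a b * E y a m) (fun y => E y b n) x (cb R k) d1 (dd b n).
  have h2 := @DM R (fun _ => Defs.eta R a b) (fun y => E y a m) x (cb R k) (dc _) (dd a m).
  simpl in h1, h2. rewrite h1 h2 dc0 /pd. ring.
have dr : forall a b, derivable (fun y => Defs.eta R a b * E y a m * E y b n) x (cb R k).
  move=> a b.
  have d1 : derivable (fun y => Defs.eta R a b * E y a m) x (cb R k).
    exact: (@DMd R (fun _ => Defs.eta R a b) (fun y => E y a m)).
  exact: (@DMd R (fun y => Defs.eta R a b * E y a m) (fun y => E y b n)).
rewrite /pd /gmet.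
have h3 := @DS R (fun a y => \sum_(b<4) Defs.eta R a b * E y a m * E y b n) x (cb R k).
rewrite /= in h3; rewrite h3; last first.
  move=> a; exact: (@DSd R (fun b y => Defs.eta R a b * E y a m * E y b n)).
rewrite (eq_bigr (fun a => \sum_(b<4) Defs.eta R a b * (E x a m * pd k (fun y => E y b n) x + E x b n * pd k (fun y => E y a m) x))); last first.
  move=> a _.
  have h4 := @DS R (fun b y => Defs.eta R a b * E y a m * E y b n) x (cb R k).
  rewrite /= in h4; rewrite h4 //.
  by apply: eq_bigr => b _; exact: key.
rewrite Ex.
transitivity (\sum_(a<4) (\sum_(b<4) Defs.eta R a b * pd k (fun y => E y b n) x) * (1%:M : 'M[R]_4) a m
  + \sum_(a<4) (\sum_(b<4) Defs.eta R a b * (1%:M : 'M[R]_4) b n) * pd k (fun y => E y a m) x).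
  rewrite -big_split; apply: eq_bigr => a _ /=; rewrite !mulr_suml -big_split.
  by apply: eq_bigr => b _ /=; ring.
rewrite sum_idR.
rewrite [X in _ + X](eq_bigr (fun a => pd k (fun y => E y a m) x * Defs.eta R a n)); last first.
  by move=> a _; rewrite sum_idR mulrC.
rewrite sum_eta sum_etaR /pd; ring.
Qed.

Lemma D_time (R : realType) (U : set 'rV[R]_4) (E : 'rV[R]_4 -> 'M[R]_4) tau :
  open U -> U (worldline tau) -> (forall t, U (worldline t) -> E (worldline t) = 1%:M) ->
  forall a n, pd ord0 (fun y => E y a n) (worldline tau) = 0.
Proof.
move=> oU Ut EW a n.
have nU : \forall h \near (0:R)^', U (h *: cb R ord0 + worldline tau).
  have hx : nbhs (worldline tau) U by apply: open_nbhs_nbhs.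
  exact: (@line_cvg R (cb R ord0) (worldline tau) _ hx).
rewrite /pd /derive; apply: cvg_lim => //.
apply: cvg_near_cst; near=> h.
have Uh : U (h *: cb R ord0 + worldline tau) by near: h; exact: nU.
have ew : h *: cb R ord0 + worldline tau = worldline (h + tau).
  by rewrite /worldline scalerDl.
rewrite /= ew in Uh *.
by rewrite EW // EW // subrr scaler0.
Unshelve. all: by end_near.
Qed.

Lemma quad1 (R : realType) (F : 'I_4 -> 'I_4 -> R) i :
  \sum_(p<4) \sum_(q<4) F p q * cb R i 0 p * cb R i 0 q = F i i.
Proof.
rewrite (eq_bigr (fun p => F p i * cb R i 0 p)); first by rewrite sum_cb.
by move=> p _; rewrite (sum_cb i (fun q => F p q * cb R i 0 p)).
Qed.

Lemma quad2 (R : realType) (F : 'I_4 -> 'I_4 -> R) i j :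
  \sum_(p<4) \sum_(q<4) F p q * (cb R i + cb R j) 0 p * (cb R i + cb R j) 0 q
  = F i i + F i j + F j i + F j j.
Proof.
rewrite (eq_bigr (fun p => (F p i + F p j) * cb R i 0 p + (F p i + F p j) * cb R j 0 p)).
  by rewrite big_split /= !sum_cb; ring.
move=> p _.
rewrite (eq_bigr (fun q => (cb R i + cb R j) 0 p * (F p q * cb R i 0 q) + (cb R i + cb R j) 0 p * (F p q * cb R j 0 q))).
  by rewrite big_split /= -!mulr_sumr !sum_cb mxE; ring.
by move=> q _; rewrite [(cb R i + cb R j) 0 q]mxE; ring.
Qed.

Lemma cb0 (R : realType) (i : 'I_4) : i != ord0 -> cb R i 0 ord0 = 0.
Proof. by move=> hi; rewrite /cb mxE eq_sym (negbTE hi) andbF. Qed.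

Lemma eta_sp (R : realType) (i : 'I_4) : i != ord0 -> Defs.eta R i i = -1.
Proof. by move=> hi; rewrite /Defs.eta eqxx (negbTE hi). Qed.

Lemma eta00 (R : realType) : Defs.eta R ord0 ord0 = 1.
Proof. by rewrite /Defs.eta eqxx. Qed.

Lemma main_facts (R : realType) (U : set 'rV[R]_4) (E : 'rV[R]_4 -> 'M[R]_4) :
  open U ->
  (forall x, U x -> forall (a m : 'I_4), differentiable (fun y => E y a m) x) ->
  (forall x, U x -> E x \in unitmx) ->
  (forall tau, U (worldline tau) -> E (worldline tau) = 1%:M) ->
  (forall tau (n : 'rV[R]_4) s, n 0 ord0 = 0 ->
     (forall u, 0 <= u <= 1 -> U (worldline tau + (u * s) *: n)) ->
     forall mu : 'I_4,
     \sum_(p < 4) \sum_(q < 4) Gam E (worldline tau + s *: n) mu p q * n 0 p * n 0 q = 0) ->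
  (forall tau (n : 'rV[R]_4) s, n 0 ord0 = 0 ->
     (forall u, 0 <= u <= 1 -> U (worldline tau + (u * s) *: n)) ->
     forall (mu a : 'I_4),
     'D_n (fun y => einv E y mu a) (worldline tau + s *: n)
     + \sum_(p < 4) \sum_(q < 4)
         Gam E (worldline tau + s *: n) mu p q * n 0 p * einv E (worldline tau + s *: n) q a
     = 0) ->
  forall tau, U (worldline tau) ->
  exists p1 p2 p3 w12 w13 w23 : R,
    forall a m n, torsion E (worldline tau) a m n = TD p1 p2 p3 w12 w13 w23 a m n.
Proof.
move=> oU dE uE EW Geo PT tau Ut.
have Ex : E (worldline tau) = 1%:M := EW tau Ut.
have dEx := dE _ Ut.
have einv1 : einv E (worldline tau) = 1%:M by rewrite /einv Ex invmx1.
have gi : forall m n, ginv E (worldline tau) m n = Defs.eta R m n.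
  move=> m n; rewrite /ginv einv1.
  rewrite (eq_bigr (fun a => (\sum_(b<4) Defs.eta R a b * (1%:M : 'M[R]_4) n b) * (1%:M : 'M[R]_4) m a)).
    by rewrite sum_idL sum_idL.
  by move=> a _; rewrite mulr_suml; apply: eq_bigr => b _; ring.
pose d := fun m a n => pd m (fun y => E y a n) (worldline tau).
have hT : forall a m n, torsion E (worldline tau) a m n = d m a n - d n a m by [].
have Z0 : forall a n, d i0 a n = 0.
  move=> a n; have -> : i0 = ord0 by apply: val_inj.
  exact: (D_time oU Ut EW).
have Z0' : forall a n, d ord0 a n = 0 by move=> a n; exact: (D_time oU Ut EW).
have dg : forall k m n, pd k (fun y => gmet E y m n) (worldline tau)
    = Defs.eta R n n * d k n m + Defs.eta R m m * d k m n.
  by move=> k m n; rewrite D_gmet.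
pose G := fun k m n => Defs.eta R n n * d k n m + Defs.eta R m m * d k m n.
have GamE : forall mu p q, Gam E (worldline tau) mu p q
    = 2^-1 * (Defs.eta R mu mu * (G p mu q + G q mu p - G mu p q)).
  move=> mu p q; rewrite /Gam.
  rewrite (eq_bigr (fun r => Defs.eta R mu r * (G p r q + G q r p - G r p q))).
    by rewrite sum_eta.
  by move=> r _; rewrite gi !dg.
have Gsym : forall mu p q, Gam E (worldline tau) mu p q = Gam E (worldline tau) mu q p.
  by move=> mu p q; rewrite !GamE /G; ring.
have geoE : forall (nv : 'rV[R]_4), nv 0 ord0 = 0 -> forall mu,
    \sum_(p<4) \sum_(q<4) Gam E (worldline tau) mu p q * nv 0 p * nv 0 q = 0.
  move=> nv nv0 mu.
  have := Geo tau nv 0 nv0 _ mu; rewrite scale0r addr0; apply.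
  by move=> u _; rewrite mulr0 scale0r addr0.
have geo1 : forall mu i j, i != ord0 -> j != ord0 -> Gam E (worldline tau) mu i j = 0.
  move=> mu i j hi hj.
  have h1 := geoE (cb R i + cb R j).
  rewrite mxE !cb0 // addr0 in h1.
  have {}h1 := h1 erefl mu.
  rewrite quad2 in h1.
  have h2 := geoE (cb R i) (@cb0 R _ hi) mu; rewrite quad1 in h2.
  have h3 := geoE (cb R j) (@cb0 R _ hj) mu; rewrite quad1 in h3.
  rewrite (Gsym mu j i) in h1.
  lra.
have ptE : forall i, i != ord0 -> forall mu a, d i mu a = Gam E (worldline tau) mu i a.
  move=> i hi mu a.
  have Us : forall (nv : 'rV[R]_4) u, 0 <= u <= 1 -> U (worldline tau + (u * 0) *: nv).
    by move=> nv u _; rewrite mulr0 scale0r addr0.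
  have := PT tau (cb R i) 0 (@cb0 R _ hi) (Us _) mu a.
  rewrite scale0r addr0 (@D_inv R U E (worldline tau) (cb R i) oU Ut uE Ex dEx) einv1.
  rewrite (eq_bigr (fun p => Gam E (worldline tau) mu p a * cb R i 0 p)); last first.
    by move=> p _; rewrite (sum_idR a (fun q => Gam E (worldline tau) mu p q * cb R i 0 p)).
  rewrite sum_cb /d /pd => H.
  lra.
have F2 : forall i mu j, i != ord0 -> j != ord0 -> d i mu j = 0.
  by move=> i mu j hi hj; rewrite ptE // geo1.
have F3 : forall i mu, i != ord0 -> mu != ord0 -> d i mu i0 + d mu i i0 = 0.
  move=> i mu hi hmu.
  have -> : i0 = ord0 by apply: val_inj.
  have e := ptE i hi mu ord0.
  rewrite GamE /G (F2 i ord0 mu) // (F2 mu ord0 i) // (@eta_sp R _ hi) (@eta_sp R _ hmu) (eta00 R) !Z0' in e.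
  lra.
exists (d i1 i0 i0), (d i2 i0 i0), (d i3 i0 i0), (d i1 i2 i0), (d i1 i3 i0), (d i2 i3 i0).
have dform : forall m a n, d m a n =
   Dform (d i1 i0 i0) (d i2 i0 i0) (d i3 i0 i0) (d i1 i2 i0) (d i1 i3 i0) (d i2 i3 i0) m a n.
  clearbody d.
  move=> m a n.
  case: (ord4P m) => [->|[->|[->|->]]];
  case: (ord4P a) => [->|[->|[->|->]]]; case: (ord4P n) => [->|[->|[->|->]]];
  rewrite /Dform /= ?Z0 //;
  first [ by rewrite F2
        | (have := F3 i1 i2 erefl erefl; lra)
        | (have := F3 i1 i3 erefl erefl; lra)
        | (have := F3 i2 i3 erefl erefl; lra)
        | (have := F3 i1 i1 erefl erefl; lra)
        | (have := F3 i2 i2 erefl erefl; lra)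
        | (have := F3 i3 i3 erefl erefl; lra) ].
move=> a m n; rewrite hT /TD -!dform //.
Qed.

Lemma final_alg (R : realType) (E : 'rV[R]_4 -> 'M[R]_4) x (p1 p2 p3 w12 w13 w23 : R) :
  E x = 1%:M ->
  (forall a m n, torsion E x a m n = TD p1 p2 p3 w12 w13 w23 a m n) ->
  (forall (mu a : 'I_4), tdens E x mu a = 0) /\
  (forall (a b : 'I_4), Mdens E x a b = 0).
Proof.
move=> Ex hT.
set T := TD p1 p2 p3 w12 w13 w23.
have einv1 : einv E x = 1%:M by rewrite /einv Ex invmx1.
have gi : forall m n, ginv E x m n = Defs.eta R m n.
  move=> m n; rewrite /ginv einv1.
  rewrite (eq_bigr (fun a => (\sum_(b<4) Defs.eta R a b * (1%:M : 'M[R]_4) n b) * (1%:M : 'M[R]_4) m a)).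
    by rewrite sum_idL sum_idL.
  by move=> a _; rewrite mulr_suml; apply: eq_bigr => b _; ring.
have gm : forall m n, gmet E x m n = Defs.eta R m n.
  move=> m n; rewrite /gmet Ex.
  rewrite (eq_bigr (fun a => (\sum_(b<4) Defs.eta R a b * (1%:M : 'M[R]_4) b n) * (1%:M : 'M[R]_4) a m)).
    by rewrite sum_idR sum_idR.
  by move=> a _; rewrite mulr_suml; apply: eq_bigr => b _; ring.
have Tudd_eq : forall l m n, Tudd E x l m n = T l m n.
  by move=> l m n; rewrite /Tudd einv1 sum_id1 hT.
have Tuuu_eq : forall l m n, Tuuu E x l m n = Tuuu0 T l m n.
  move=> l m n; rewrite /Tuuu /Tuuu0.
  rewrite (eq_bigr (fun p => Defs.eta R m p * (Defs.eta R n n * T l p n))); last first.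
    move=> p _; rewrite -(sum_eta n (T l p)) mulr_sumr; apply: eq_bigr => q _.
    by rewrite !gi Tudd_eq; ring.
  by rewrite (sum_eta m (fun p => Defs.eta R n n * T l p n)); ring.
have Tvu_eq : forall m, Tvu E x m = Tvu0 T m.
  move=> m; rewrite /Tvu /Tvu0.
  rewrite (eq_bigr (fun n => Defs.eta R m n * Tvd E x n)); last by move=> n _; rewrite gi.
  rewrite sum_eta /Tvd; congr (_ * _); apply: eq_bigr => l _; exact: Tudd_eq.
have Sig_eq : forall l m n, Sigma E x l m n = Sig0 T l m n.
  by move=> l m n; rewrite /Sigma /Sig0 !Tuuu_eq !Tvu_eq !gi.
have Tddd_eq : forall l m n, Tddd E x l m n = Tddd0 T l m n.
  move=> l m n; rewrite /Tddd /Tddd0.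
  rewrite (eq_bigr (fun p => Defs.eta R l p * T p m n)) ?sum_eta //.
  by move=> p _; rewrite gm Tudd_eq.
have Tscal_eq : Tscal E x = 0.
  rewrite /Tscal; rewrite -[RHS](Ts0 p1 p2 p3 w12 w13 w23).
  apply: eq_bigr => l _; apply: eq_bigr => m _; apply: eq_bigr => n _.
  by rewrite Sig_eq Tddd_eq.
have Tddu_eq : forall l n a, Tddu_frame E x l n a = Tddd0 T l n a * Defs.eta R a a.
  move=> l n a; rewrite /Tddu_frame Ex.
  rewrite (eq_bigr (fun r => Tddd E x l n r * Defs.eta R r a)); last first.
    by move=> r _; rewrite (sum_idL a (fun s => Tddd E x l n r * ginv E x r s)) gi.
  by rewrite sum_etaR Tddd_eq.
split.
  move=> m a; rewrite /tdens Tscal_eq mulr0 subr0.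
  have -> : \sum_(l<4) \sum_(n<4) Sigma E x l n m * Tddu_frame E x l n a = 0.
    rewrite -[RHS](alg_t p1 p2 p3 w12 w13 w23 m a).
    apply: eq_bigr => l _; apply: eq_bigr => n _.
    by rewrite Sig_eq Tddu_eq.
  by rewrite !mulr0.
move=> a b; rewrite /Mdens /Sigma_fcf Ex.
have sf : forall a b m, \sum_(l<4) \sum_(n<4) (1%:M : 'M[R]_4) a l * (1%:M : 'M[R]_4) b n * Sigma E x l m n
    = Sig0 T a m b.
  move=> a' b' m.
  rewrite (eq_bigr (fun l => (1%:M : 'M[R]_4) a' l * Sigma E x l m b')); last first.
    move=> l _; rewrite -(sum_id1 b' (fun n => Sigma E x l m n)) mulr_sumr.
    by apply: eq_bigr => n _; rewrite mulrA.
  by rewrite sum_id1 Sig_eq.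
by rewrite !sf (alg_M p1 p2 p3 w12 w13 w23 a b) mulr0.
Qed.

Unset Implicit Arguments.

Theorem mainTheorem2 (R : realType) (U : set 'rV[R]_4) (E : 'rV[R]_4 -> 'M[R]_4) :
  (* chart domain: an open set of proper (Fermi-type) coordinates *)
  open U ->
  (* the tetrad is a differentiable, invertible field on U *)
  (forall x, U x -> forall (a m : 'I_4), differentiable (fun y => E y a m) x) ->
  (forall x, U x -> E x \in unitmx) ->
  (* along gamma : tau |-> (tau,0,0,0), e_a = d_a (e_(0) = 4-velocity, e_(i) = triad) *)
  (forall tau, U (worldline tau) -> E (worldline tau) = 1%:M) ->
  (* the spatial coordinate lines s |-> (tau, s n) are affinely parametrized geodesics
     orthogonal to gamma ... *)
  (forall tau (n : 'rV[R]_4) s, n 0 ord0 = 0 ->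
     (forall u, 0 <= u <= 1 -> U (worldline tau + (u * s) *: n)) ->
     forall mu : 'I_4,
     \sum_(p < 4) \sum_(q < 4) Gam E (worldline tau + s *: n) mu p q * n 0 p * n 0 q = 0) ->
  (* ... along which the frame e_a is parallel transported (Levi-Civita) *)
  (forall tau (n : 'rV[R]_4) s, n 0 ord0 = 0 ->
     (forall u, 0 <= u <= 1 -> U (worldline tau + (u * s) *: n)) ->
     forall (mu a : 'I_4),
     'D_n (fun y => einv E y mu a) (worldline tau + s *: n)
     + \sum_(p < 4) \sum_(q < 4)
         Gam E (worldline tau + s *: n) mu p q * n 0 p * einv E (worldline tau + s *: n) q a
     = 0) ->
  forall tau, U (worldline tau) ->
    (forall (mu a : 'I_4), tdens E (worldline tau) mu a = 0) /\
    (forall (a b : 'I_4), Mdens E (worldline tau) a b = 0).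
Proof.
move=> oU dE uE EW Geo PT tau Ut.
have [p1 [p2 [p3 [w12 [w13 [w23 hT]]]]]] := @main_facts R U E oU dE uE EW Geo PT tau Ut.
exact: (@final_alg R E (worldline tau) p1 p2 p3 w12 w13 w23 (EW tau Ut) hT).
Qed.
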